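(* Let $\mathcal{P}=(|K|,V)$ be a polyhedral model with cell poset model $\mathbb{F}(\mathcal{P})=(\tilde K,\preceq,\mathcal{V})$. For every $\downarrow$-path $\pi:[0;\ell]\to\tilde K$ there is a topological path $\pi':[0,1]\to|K|$ such that (i) $\mathbb{F}(\pi'(0))=\pi(0)$, (ii) $\mathbb{F}(\pi'(1))=\pi(\ell)$, and (iii) for every $r\in(0,1)$ there is $i<\ell$ with $\mathbb{F}(\pi'(r))=\pi(i)$.
   Context: Fix a set PL of proposition letters. A simplex $\sigma\subseteq\mathbb{R}^m$ is the convex hull of $d+1$ affinely independent points $v_0,\dots,v_d$; its faces are the simplices spanned by nonempty subsets of its vertices. Its relative interior (cell) is $\tilde\sigma=\{\sum_i\lambda_iv_i:\lambda_i\in(0,1],\sum_i\lambda_i=1\}$. A simplicial complex $K$ is a finite set of simplices in $\mathbb{R}^m$ closed under faces, any two of which intersect in a common face or in $\emptyset$. Its set of cells $\tilde K=\{\tilde\sigma:\sigma\in K\}$ is partially ordered by $\tilde\sigma_1\preceq\tilde\sigma_2$ iff $\tilde\sigma_1$ is contained in the topological closure of $\tilde\sigma_2$ (equivalently, $\sigma_1$ is a face of $\sigma_2$). The polyhedron $|K|$ is the union of the simplices of $K$ with the subspace topology; its cells partition $|K|$. A polyhedral model is $\mathcal{P}=(|K|,V)$ with $V:\mathrm{PL}\to\mathcal{P}(|K|)$ such that each $V(p)$ is a union of cells. Its cell poset model is $\mathbb{F}(\mathcal{P})=(\tilde K,\preceq,\mathcal{V})$ with $\tilde\sigma\in\mathcal{V}(p)$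 iff $\tilde\sigma\subseteq V(p)$; for $x\in|K|$, $\mathbb{F}(x)$ is the unique cell containing $x$. A topological path is a continuous map $[0,1]\to|K|$. In a poset $(W,\preceq)$, a $\downarrow$-path of length $\ell\ge1$ is $\pi:\{0,\dots,\ell\}\to W$ with $\pi(i),\pi(i+1)$ comparable under $\preceq$ for each $i<\ell$, and $\pi(\ell)\preceq\pi(\ell-1)$. *)

(* Defs.v *)
From HB Require Import structures.
From mathcomp Require Import all_boot all_order all_algebra.
From mathcomp Require Import all_classical all_reals all_analysis.
Set Implicit Arguments. Unset Strict Implicit. Unset Printing Implicit Defensive.
Import Order.TTheory GRing.Theory Num.Theory.
Import numFieldNormedType.Exports.
Local Open Scope classical_set_scope.
Local Open Scope ring_scope.

Section Simplicial.
Variables (R : realType) (m : nat).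
Local Notation pt := 'rV[R]_m.

(* A simplex is given by its (finite) list of vertices. *)
Definition aff_indep (s : seq pt) : Prop :=
  forall mu : 'I_(size s) -> R,
    \sum_(i < size s) mu i = 0 ->
    \sum_(i < size s) mu i *: s`_i = 0 ->
    forall i, mu i = 0.

Definition hull (s : seq pt) : set pt :=
  [set x | exists lam : 'I_(size s) -> R,
     (forall i, 0 <= lam i <= 1) /\ \sum_(i < size s) lam i = 1 /\
     x = \sum_(i < size s) lam i *: s`_i].

Definition relint (s : seq pt) : set pt :=
  [set x | exists lam : 'I_(size s) -> R,
     (forall i, 0 < lam i <= 1) /\ \sum_(i < size s) lam i = 1 /\
     x = \sum_(i < size s) lam i *: s`_i].

Definition face (tau sigma : seq pt) : Prop :=
  tau != [::] /\ {subset tau <= sigma}.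

Definition simplicial_complex (K : seq (seq pt)) : Prop :=
  (forall sigma, sigma \in K -> sigma != [::] /\ aff_indep sigma) /\
  (forall sigma tau, sigma \in K -> face tau sigma ->
     exists2 sigma', sigma' \in K & sigma' =i tau) /\
  (forall s1 s2, s1 \in K -> s2 \in K ->
     hull s1 `&` hull s2 = set0 \/
     exists tau, [/\ face tau s1, face tau s2 & hull s1 `&` hull s2 = hull tau]).

Definition polyhedron (K : seq (seq pt)) : set pt :=
  [set x | exists2 sigma, sigma \in K & hull sigma x].

Definition cells (K : seq (seq pt)) : set (set pt) :=
  [set c | exists2 sigma, sigma \in K & c = relint sigma].

Definition cell_le (c1 c2 : set pt) : Prop := c1 `<=` closure c2.

Definition polyhedral_valuation (PL : Type) (K : seq (seq pt)) (V : PL -> set pt) : Prop :=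
  forall p, exists C : set (set pt), C `<=` cells K /\ V p = \bigcup_(c in C) c.

Definition down_path (K : seq (seq pt)) (l : nat) (pi : nat -> set pt) : Prop :=
  [/\ (1 <= l)%N,
      (forall i, (i <= l)%N -> cells K (pi i)),
      (forall i, (i < l)%N -> cell_le (pi i) (pi i.+1) \/ cell_le (pi i.+1) (pi i)) &
      cell_le (pi l) (pi l.-1)].

Definition topo_path (K : seq (seq pt)) (f : R -> pt) : Prop :=
  {within `[0, 1], continuous f} /\ (forall r, 0 <= r <= 1 -> polyhedron K (f r)).

End Simplicial.

(* Main.v *)
Require Import Defs.
From HB Require Import structures.
From mathcomp Require Import all_boot all_order all_algebra.
From mathcomp Require Import all_classical all_reals all_analysis.
From mathcomp Require Import lra.
Import Order.TTheory GRing.Theory Num.Theory.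
Import numFieldNormedType.Exports.
Local Open Scope classical_set_scope.
Local Open Scope ring_scope.

Lemma hull_closed (R : realType) (m : nat) (s : seq 'rV[R]_m) : closed (hull s).
Proof.
pose n := size s.
pose A1 : set 'rV[R]_n := [set v | forall i, `[0, 1]%classic (v ord0 i)].
pose A2 : set 'rV[R]_n := [set v | \sum_(i < n) v ord0 i = 1].
pose g := fun v : 'rV[R]_n => \sum_(i < n) v ord0 i *: s`_i.
have cA1 : compact A1 := @rV_compact R n (fun=> `[0, 1]%classic) (fun=> @segment_compact R 0 1).
have csum : continuous (fun v : 'rV[R]_n => \sum_(i < n) v ord0 i).
  apply: continuous_big; first exact: add_continuous.
  by move=> i _; exact: coord_continuous.
have cA2 : closed A2.
  have -> : A2 = (fun v : 'rV[R]_n => \sum_(i < n) v ord0 i) @^-1` [set 1] by [].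
  by apply: (proj1 (continuous_closedP _) csum); exact: closed_eq.
have cg : continuous g.
  apply: continuous_big; first exact: add_continuous.
  by move=> i _ v; apply: continuousZr_tmp; exact: coord_continuous.
have cA : compact (A1 `&` A2) by exact: compact_closedI.
have : compact (g @` (A1 `&` A2)).
  by apply: continuous_compact => //; apply: continuous_subspaceT.
move=> /compact_closed; have -> : g @` (A1 `&` A2) = hull s.
  apply/seteqP; split.
  - move=> x [v [H1 H2] <-]; exists (fun i => v ord0 i); split => //.
  - move=> x [lam [H1 [H2 ->]]]; exists (\row_i lam i).
      split; last by rewrite /A2 /=; under eq_bigr do rewrite mxE.
      by move=> i; rewrite /= mxE in_itv /=.
    by rewrite /g; under eq_bigr do rewrite mxE.
by apply; exact: norm_hausdorff.
Qed.

Lemma relint_hull (R : realType) (m : nat) (s : seq 'rV[R]_m) : relint s `<=` hull s.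
Proof.
move=> x [lam [H1 [H2 ->]]]; exists lam; split => // i.
by have /andP[/ltW -> ->] := H1 i.
Qed.

Lemma closure_relint (R : realType) (m : nat) (s : seq 'rV[R]_m) :
  closure (relint s) `<=` hull s.
Proof.
by move=> x /(closureS (@relint_hull R m s)) /(@hull_closed R m s).
Qed.

Lemma seg_relint (R : realType) (m : nat) (s : seq 'rV[R]_m) x y a :
  hull s x -> relint s y -> 0 < a <= 1 -> relint s ((1 - a) *: x + a *: y).
Proof.
move=> [lam [H1 [H2 ->]]] [mu [K1 [K2 ->]]] /andP[a0 a1].
exists (fun i => (1 - a) * lam i + a * mu i); split; [|split].
- move=> i; have /andP[l0 l1] := H1 i; have /andP[m0 m1] := K1 i.
  apply/andP; split.
    apply: ltr_pwDr; first by apply: mulr_gt0.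
    by apply: mulr_ge0 => //; rewrite subr_ge0.
  have : (1 - a) * lam i <= 1 - a by rewrite ler_piMr // subr_ge0.
  have : a * mu i <= a by rewrite ler_piMr // ltW.
  lra.
- by rewrite big_split /= -!mulr_sumr H2 K2 !mulr1 subrK.
- rewrite !scaler_sumr -big_split /=; apply: eq_bigr => i _.
  by rewrite !scalerA -scalerDl.
Qed.

Lemma relint_nonempty (R : realType) (m : nat) (s : seq 'rV[R]_m) :
  s != [::] -> exists x, relint s x.
Proof.
move=> sn; have n0 : (0 < size s)%N by case: s sn.
exists (\sum_(i < size s) (size s)%:R^-1 *: s`_i).
exists (fun _ => (size s)%:R^-1); split; [|split] => //.
- move=> _; apply/andP; split; first by rewrite invr_gt0 ltr0n.
  by rewrite invf_le1 ?ltr0n // ler1n.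
- by rewrite sumr_const card_ord -[_ *+ _]mulr_natr mulVf // pnatr_eq0 -lt0n.
Qed.

Definition clamp {R : realType} (u : R) : R := Num.min (Num.max u 0) 1.
Lemma clamp0 {R : realType} (u : R) : u <= 0 -> clamp u = 0.
Proof. rewrite /clamp /Order.min /Order.max => h; case: (ltP u 0) => ?; case: ltP => ?; lra. Qed.
Lemma clamp1 {R : realType} (u : R) : 1 <= u -> clamp u = 1.
Proof. rewrite /clamp /Order.min /Order.max => h; case: (ltP u 0) => ?; case: ltP => ?; lra. Qed.
Lemma clampid {R : realType} (u : R) : 0 <= u <= 1 -> clamp u = u.
Proof. rewrite /clamp /Order.min /Order.max => /andP[h h']; case: (ltP u 0) => ?; case: ltP => ?; lra. Qed.

Lemma feval (R : realType) (m l : nat) (x : nat -> 'rV[R]_m) (k : nat) (t r : R) :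
  (k < l)%N -> 0 <= t <= 1 -> l%:R * r = k%:R + t ->
  x 0%N + \sum_(i < l) clamp (l%:R * r - i%:R) *: (x i.+1 - x i)
  = (1 - t) *: x k + t *: x k.+1.
Proof.
move=> kl /andP[t0 t1] e; rewrite e.
rewrite -(big_mkord xpredT (fun i => clamp (k%:R + t - i%:R) *: (x i.+1 - x i))).
rewrite (big_cat_nat _ (n:=k)) //=; last exact: ltnW.
rewrite [\sum_(k <= i < l) _]big_ltn //.
rewrite [X in _ + (_ + (_ + X))]big1_seq; last first.
  move=> i /andP[_]; rewrite mem_index_iota => /andP[ki _].
  rewrite clamp0 ?scale0r //.
  have : (k.+1%:R <= i%:R :> R) by rewrite ler_nat.
  rewrite -addn1 natrD; lra.
rewrite (@eq_big_nat _ _ _ 0 k _ (fun i => x i.+1 - x i)); last first.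
  move=> i /andP[_ ik]; rewrite clamp1 ?scale1r //.
  have : (i.+1%:R <= k%:R :> R) by rewrite ler_nat.
  rewrite -addn1 natrD; lra.
rewrite telescope_sumr // clampid; last by apply/andP; split; lra.
have -> : k%:R + t - k%:R = t by lra.
rewrite addr0 scalerBr scalerBl scale1r.
by rewrite addrA [x 0%N + _]addrC subrK [t *: x k.+1 - _]addrC addrA.
Qed.

Lemma clamp_cont {R : realType} (a b : R) : continuous (fun r : R => clamp (a * r - b)).
Proof.
move=> r; rewrite /clamp.
apply: (@continuous_min R R (fun r => Num.max (a * r - b) 0) (fun=> 1)); last exact: cvg_cst.
apply: (@continuous_max R R (fun r => a * r - b) (fun=> 0)); last exact: cvg_cst.
apply: continuousB; last exact: cvg_cst.
apply: continuousM; first exact: cvg_cst.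
exact: cvg_id.
Qed.

Arguments relint_nonempty {R m s}.
Arguments closure_relint {R m s}.
Arguments relint_hull {R m s}.

Theorem lemma10 (R : realType) (m : nat) (PL : Type)
  (K : seq (seq 'rV[R]_m)) (V : PL -> set 'rV[R]_m)
  (HK : simplicial_complex K) (HV : polyhedral_valuation K V)
  (l : nat) (pi : nat -> set 'rV[R]_m) (Hpi : down_path K l pi) :
  exists f : R -> 'rV[R]_m,
    [/\ topo_path K f,
        pi 0%N (f 0),
        pi l (f 1) &
        forall r, 0 < r < 1 -> exists2 i, (i < l)%N & pi i (f r)].
Proof.
case: Hpi => l1 Hcell Hcomp Hlast.
have Hx : forall i, exists y : 'rV[R]_m, (i <= l)%N -> pi i y.
  move=> i; case: (leqP i l) => il; last by exists 0.
  have [s sK pe] := Hcell i il; have [sn _] := HK.1 s sK.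
  by have [y hy] := relint_nonempty sn; exists y; rewrite pe.
have [x xP] := choice Hx.
pose f := fun r : R => x 0%N + \sum_(i < l) clamp (l%:R * r - i%:R) *: (x i.+1 - x i).
have f0 : f 0 = x 0%N.
  rewrite /f (@feval R m l x 0%N 0 0).
  - by rewrite subr0 scale1r scale0r addr0.
  - by [].
  - by rewrite lexx ler01.
  - by rewrite mulr0 addr0.
have f1 : f 1 = x l.
  rewrite /f (@feval R m l x l.-1 1 1).
  - by rewrite subrr scale0r add0r scale1r prednK.
  - by rewrite prednK.
  - by rewrite lexx ler01.
  - by rewrite mulr1 natr1 prednK.
have Hmid : forall r, 0 < r < 1 -> exists2 i, (i < l)%N & pi i (f r).
  move=> r /andP[r0 r1].
  have lpos : (0 : R) < l%:R by rewrite ltr0n.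
  have u0 : 0 <= l%:R * r by apply: mulr_ge0; [exact: ltW|exact: ltW].
  have ul : l%:R * r < l%:R by rewrite -{2}[l%:R]mulr1 ltr_pM2l.
  have /andP[ku1 ku2] := truncn_itv u0.
  set k := Num.truncn (l%:R * r) in ku1 ku2.
  have kl : (k < l)%N by rewrite -(ltr_nat R); apply: le_lt_trans ku1 ul.
  move: ku2; rewrite -addn1 natrD => ku2.
  set t := l%:R * r - k%:R.
  have fr : f r = (1 - t) *: x k + t *: x k.+1.
    by apply: feval => //; [apply/andP; split; rewrite /t; lra| rewrite /t; lra].
  rewrite fr.
  have [t0|tpos] := eqVneq t 0.
    exists k => //; rewrite t0 subr0 scale1r scale0r addr0.
    exact: xP (ltnW kl).
  have tp : 0 < t by rewrite lt0r tpos /t; lra.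
  have t1 : t < 1 by rewrite /t; lra.
  have back : cell_le (pi k.+1) (pi k) -> pi k ((1 - t) *: x k + t *: x k.+1).
    move=> cle; have [s sK pe] := Hcell k (ltnW kl).
    have hx : hull s (x k.+1).
      apply: closure_relint; rewrite -pe; apply: cle; exact: xP.
    have rx : relint s (x k) by rewrite -pe; exact: xP (ltnW kl).
    have := @seg_relint R m s _ _ (1 - t) hx rx.
    have -> : 1 - (1 - t) = t by lra.
    rewrite pe [_ + t *: _]addrC; apply; apply/andP; split; lra.
  have [kl1|kl1] := eqVneq k.+1 l.
    exists k => //; apply: back; move: Hlast; rewrite -kl1 /=; exact.
  have kl2 : (k.+1 < l)%N by rewrite ltn_neqAle kl1 kl.
  case: (Hcomp k kl) => cle; last by exists k => //; apply: back.
  exists k.+1 => //.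
  have [s sK pe] := Hcell k.+1 (ltnW kl2).
  have hx : hull s (x k).
    apply: closure_relint; rewrite -pe; apply: cle; exact: xP (ltnW kl).
  have rx : relint s (x k.+1) by rewrite -pe; exact: xP (ltnW kl2).
  rewrite pe; apply: (@seg_relint R m s) => //; apply/andP; split; lra.
have incell : forall i p, (i <= l)%N -> pi i p -> polyhedron K p.
  move=> i p il; have [s sK pe] := Hcell i il; rewrite pe => hp.
  by exists s => //; apply: relint_hull.
exists f; split => //; last by rewrite f1; exact: xP.
- split.
    apply: continuous_subspaceT => r.
    apply: continuousD; first exact: cvg_cst.
    have hc : continuous (fun r : R => \sum_(i < l) clamp (l%:R * r - i%:R) *: (x i.+1 - x i)).
      apply: continuous_big => [|i _]; first exact: add_continuous.
      move=> r'.
      have := @continuousZr_tmp R _ R (fun r => clamp (l%:R * r - (nat_of_ord i)%:R)) (x i.+1 - x i) r' (clamp_cont _ _ r'). exact.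
    exact: hc.
  move=> r /andP[r0 r1].
  have [->|rn0] := eqVneq r 0; first by rewrite f0; apply: (incell 0%N) => //; exact: xP.
  have [->|rn1] := eqVneq r 1; first by rewrite f1; apply: (incell l) => //; exact: xP.
  have [i il hi] : exists2 i, (i < l)%N & pi i (f r).
    by apply: Hmid; apply/andP; split; [rewrite lt0r rn0 r0|rewrite lt_neqAle rn1 r1].
  exact: (incell i _ (ltnW il)).
- by rewrite f0; exact: xP.
Qed.
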